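(* Let $N$ be a positive integer and $t>-\log N$. For integers $n\ge N$ let $$\delta_n(t,N)=\int_N^{n+1}\frac{dx}{t+\log x}-\sum_{k=N}^{n}\frac{1}{t+\log(k+\frac12)},$$ and set $\delta_{N-1}(t,N)=0$. (1) The sequence $(\delta_n(t,N))_{n\ge N}$ is positive, strictly increasing and bounded above; hence $\delta(t,N)=\lim_{n\to\infty}\delta_n(t,N)>0$ exists. (2) For all $n\ge N$, $\delta(t,N)-\delta_{n-1}(t,N)=\delta(t,n)$ and $$\frac{1}{24(n+1)(t+\log(n+1))^2}\le\delta(t,n)\le\frac{1}{24(n+\frac12)(t+\log(n+\frac12))^2}+\frac{1}{24n^2(t+\log n)^2}+\frac{1}{12n^2(t+\log n)^3}.$$ (3) $\delta(t,N)=\delta_{n-1}(t,N)+\frac{1+o(1)}{24n(\log n)^2}$ as $n\to\infty$, and $\delta(t,N)=O\!\left(\frac1{Nt^2}\right)$ as $t\to\infty$, with implied constant independent of $N$. *)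

(* Defs.v *)
From Stdlib Require Import Reals Lra Lia ClassicalEpsilon.
Open Scope R_scope.

(* Riemann integral of f over [a,b] as a plain real number: the value of
   RiemannInt for some integrability proof (unique by proof irrelevance of
   the value, RiemannInt_P5); arbitrary if f is not integrable. *)
Definition Rint (f : R -> R) (a b : R) : R :=
  epsilon (inhabits 0)
    (fun I => exists pr : Riemann_integrable f a b, RiemannInt pr = I).

(* ssum f N n = sum_{k=N}^{n} f k  (empty sum = 0 when n < N). *)
Fixpoint ssum (f : nat -> R) (N n : nat) : R :=
  match n with
  | O => if Nat.leb N 0 then f 0%nat else 0
  | S m => ssum f N m + (if Nat.leb N (S m) then f (S m) else 0)
  end.

(* delta_n(t,N) = int_N^{n+1} dx/(t+log x) - sum_{k=N}^{n} 1/(t+log(k+1/2)).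
   For n = N-1 this is 0 (empty integral and empty sum). *)
Definition delta_n (t : R) (N n : nat) : R :=
  Rint (fun x => / (t + ln x)) (INR N) (INR n + 1)
  - ssum (fun k => / (t + ln (INR k + / 2))) N n.

(* delta(t,N) = lim_{n -> oo} delta_n(t,N) (chosen limit; its existence is
   part of the theorem). *)
Definition delta (t : R) (N : nat) : R :=
  epsilon (inhabits 0) (fun l => Un_cv (fun m => delta_n t N (N + m)) l).

(* Main.v *)
Require Import Defs.
From Stdlib Require Import Reals Lra Lia ClassicalEpsilon.
From Coquelicot Require Import Coquelicot.
Open Scope R_scope.

Definition D (t x : R) := 0 < x /\ 0 < t + ln x.
Definition f (t x : R) := / (t + ln x).
Definition f1 (t x : R) := - / (x * (t + ln x)^2).
Definition f2 (t x : R) := / (x^2 * (t + ln x)^2) + 2 / (x^2 * (t + ln x)^3).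
Definition f3 (t x : R) := - (2 / (x^3 * (t + ln x)^2) + 6 / (x^3 * (t + ln x)^3)
   + 6 / (x^3 * (t + ln x)^4)).
Definition f4 (t x : R) := 6 / (x^4 * (t + ln x)^2) + 22 / (x^4 * (t + ln x)^3)
   + 36 / (x^4 * (t + ln x)^4) + 24 / (x^4 * (t + ln x)^5).

Ltac pos := repeat (apply Rmult_lt_0_compat || apply pow_lt || apply Rinv_0_lt_compat); lra.
Ltac nz := apply Rgt_not_eq, Rlt_gt; pos.

Ltac dtac := intros [H1 H2]; auto_derive; [repeat split; try lra; try nz | field; repeat split; try nz ].

Lemma d_f t x : D t x -> is_derive (f t) x (f1 t x).
Proof. unfold f, f1. dtac. Qed.
Lemma d_f1 t x : D t x -> is_derive (f1 t) x (f2 t x).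
Proof. unfold f1, f2. dtac. Qed.
Lemma d_f2 t x : D t x -> is_derive (f2 t) x (f3 t x).
Proof. unfold f2, f3. dtac. Qed.
Lemma d_f3 t x : D t x -> is_derive (f3 t) x (f4 t x).
Proof. unfold f3, f4. dtac. Qed.

Lemma D_mono t x y : D t x -> x <= y -> D t y.
Proof. intros [H1 H2] Hxy. split. lra. assert (ln x <= ln y) by (apply ln_le; lra). lra. Qed.

Lemma cont_of_derive (g : R -> R) (x l : R) : is_derive g x l -> continuity_pt g x.
Proof. intros H. apply continuity_pt_filterlim. apply (ex_derive_continuous g x). exists l; exact H. Qed.

Lemma tangent_le (h dh ddh : R -> R) a b m x :
  a <= m <= b -> a <= x <= b ->
  (forall y, a <= y <= b -> is_derive h y (dh y)) ->
  (forall y, a <= y <= b -> is_derive dh y (ddh y)) ->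
  (forall y, a <= y <= b -> ddh y <= 0) ->
  h m = 0 -> dh m = 0 -> h x <= 0.
Proof.
  intros Hm Hx Hh Hdh Hdd E0 E1.
  assert (Hin : forall y, Rmin m x <= y <= Rmax m x -> a <= y <= b).
  { intros y Hy. unfold Rmin, Rmax in Hy. destruct (Rle_dec m x); lra. }
  destruct (MVT_gen h m x dh) as [c [Hc Ec]].
  { intros y Hy. apply Hh, Hin. lra. }
  { intros y Hy. apply (cont_of_derive _ _ (dh y)), Hh, Hin. exact Hy. }
  assert (Hin2 : forall y, Rmin m c <= y <= Rmax m c -> a <= y <= b).
  { intros y Hy. apply Hin. unfold Rmin, Rmax in *. destruct (Rle_dec m x), (Rle_dec m c); lra. }
  destruct (MVT_gen dh m c ddh) as [d [Hd Ed]].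
  { intros y Hy. apply Hdh, Hin2. lra. }
  { intros y Hy. apply (cont_of_derive _ _ (ddh y)), Hdh, Hin2. exact Hy. }
  rewrite E0 in Ec. rewrite E1 in Ed.
  assert (hx : h x = ddh d * ((c - m) * (x - m))) by (rewrite Rminus_0_r in Ec, Ed; rewrite Ec, Ed; ring).
  rewrite hx.
  assert (ddh d <= 0) by (apply Hdd, Hin2; exact Hd).
  assert (0 <= (c - m) * (x - m)).
  { unfold Rmin, Rmax in Hc. destruct (Rle_dec m x).
    apply Rmult_le_pos; lra.
    replace ((c - m) * (x - m)) with ((m - c) * (m - x)) by ring. apply Rmult_le_pos; lra. }
  nra.
Qed.

Lemma is_derive_Rminus (g h : R -> R) x a b :
  is_derive g x a -> is_derive h x b -> is_derive (fun y => g y - h y) x (a - b).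
Proof. intros Hg Hh. exact (is_derive_minus g h x a b Hg Hh). Qed.

Lemma L_le t x y : 0 < x -> x <= y -> t + ln x <= t + ln y.
Proof. intros. assert (ln x <= ln y) by (apply ln_le; lra). lra. Qed.

Lemma f_pos t x : D t x -> 0 < f t x.
Proof. intros [H1 H2]. unfold f. pos. Qed.
Lemma f1_neg t x : D t x -> f1 t x < 0.
Proof. intros [H1 H2]. unfold f1. assert (0 < / (x * (t + ln x)^2)) by pos. lra. Qed.
Lemma f2_pos t x : D t x -> 0 < f2 t x.
Proof. intros [H1 H2]. unfold f2, Rdiv.
  assert (0 < / (x^2 * (t + ln x)^2)) by pos. assert (0 < 2 * / (x^2 * (t + ln x)^3)) by pos. lra. Qed.
Lemma f4_pos t x : D t x -> 0 < f4 t x.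
Proof. intros [H1 H2]. unfold f4, Rdiv.
  assert (0 < 6 * / (x^4 * (t + ln x)^2)) by pos.
  assert (0 < 22 * / (x^4 * (t + ln x)^3)) by pos.
  assert (0 < 36 * / (x^4 * (t + ln x)^4)) by pos.
  assert (0 < 24 * / (x^4 * (t + ln x)^5)) by pos. lra. Qed.

Lemma prod_le a b c d : 0 < a -> a <= b -> 0 < c -> c <= d -> a * c <= b * d.
Proof. intros. apply Rmult_le_compat; lra. Qed.

Lemma pow_le_mono a b n : 0 < a -> a <= b -> a ^ n <= b ^ n.
Proof. intros. apply pow_incr; lra. Qed.

Lemma f2_decr t x y : D t x -> x <= y -> f2 t y <= f2 t x.
Proof. intros Hx Hxy. pose proof (D_mono t x y Hx Hxy) as Hy. destruct Hx as [H1 H2]. destruct Hy as [H3 H4].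
  pose proof (L_le t x y H1 Hxy) as HL.
  unfold f2, Rdiv. apply Rplus_le_compat.
  - apply Rinv_le_contravar. pos. apply prod_le; try pos; apply pow_le_mono; lra.
  - apply Rmult_le_compat_l. lra. apply Rinv_le_contravar. pos. apply prod_le; try pos; apply pow_le_mono; lra.
Qed.

Lemma RInt_eval (G g : R -> R) a b : a <= b ->
  (forall x, a <= x <= b -> is_derive G x (g x)) ->
  (forall x, a <= x <= b -> continuous g x) -> RInt g a b = G b - G a.
Proof. intros Hab HG Hg. apply is_RInt_unique.
  assert (Hm : Rmin a b = a) by (apply Rmin_left; lra). assert (HM : Rmax a b = b) by (apply Rmax_right; lra).
  apply (is_RInt_derive G g a b); rewrite Hm, HM; assumption. Qed.

Lemma cont_f t x : D t x -> continuous (f t) x.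
Proof. intros H. apply (ex_derive_continuous (f t) x). exists (f1 t x). apply d_f; exact H. Qed.
Lemma cont_f2 t x : D t x -> continuous (f2 t) x.
Proof. intros H. apply (ex_derive_continuous (f2 t) x). exists (f3 t x). apply d_f2; exact H. Qed.

Lemma ex_RInt_f t a b : D t a -> a <= b -> ex_RInt (f t) a b.
Proof. intros Ha Hab. apply (ex_RInt_continuous (V:=R_CompleteNormedModule)). intros z Hz. apply cont_f.
  apply (D_mono t a). exact Ha. rewrite Rmin_left in Hz; lra. Qed.
Lemma ex_RInt_f2 t a b : D t a -> a <= b -> ex_RInt (f2 t) a b.
Proof. intros Ha Hab. apply (ex_RInt_continuous (V:=R_CompleteNormedModule)). intros z Hz. apply cont_f2.
  apply (D_mono t a). exact Ha. rewrite Rmin_left in Hz; lra. Qed.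

Definition E (t k : R) := RInt (f t) k (k + 1) - f t (k + / 2).

Lemma E_upper t k : D t k -> E t k <= f2 t k / 24.
Proof.
  intros Hk. set (m := k + / 2). set (B := f2 t k).
  set (P := fun x => f t m + f1 t m * (x - m) + B * (x - m)^2 / 2).
  assert (HP : @eq R (RInt P k (k+1)) (f t m + B / 24)).
  { rewrite (RInt_eval (fun x => f t m * x + f1 t m * (x - m)^2/2 + B * (x - m)^3/6) P).
    unfold m. field. lra.
    intros x _. unfold P. auto_derive. auto. field.
    intros x _. apply (ex_derive_continuous P x). unfold P. auto_derive. auto. }
  assert (Hle : RInt (f t) k (k+1) <= RInt P k (k+1)).
  { apply RInt_le. lra. apply ex_RInt_f; auto; lra.
    apply (ex_RInt_continuous (V:=R_CompleteNormedModule)). intros z _. apply (ex_derive_continuous P z). unfold P. auto_derive. auto.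
    intros x Hx.
    assert (Hr : f t x - P x <= 0).
    { apply (tangent_le (fun y => f t y - P y) (fun y => f1 t y - (f1 t m + B * (y - m)))
        (fun y => f2 t y - B) k (k+1) m x); try (unfold m; lra).
      - intros y Hy. apply is_derive_Rminus. apply d_f. apply (D_mono t k); auto; lra.
        unfold P. auto_derive. auto. field.
      - intros y Hy. apply is_derive_Rminus. apply d_f1. apply (D_mono t k); auto; lra.
        auto_derive. auto. field.
      - intros y Hy. unfold B. pose proof (f2_decr t k y Hk ltac:(lra)). lra.
      - unfold P. field.
      }
    lra. }
  unfold E. fold m. lra.
Qed.

Lemma E_lower t k : D t k -> f2 t (k + 1) / 24 <= E t k.
Proof.
  intros Hk. set (m := k + / 2). set (B := f2 t (k + 1)).
  set (P := fun x => f t m + f1 t m * (x - m) + B * (x - m)^2 / 2).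
  assert (HP : @eq R (RInt P k (k+1)) (f t m + B / 24)).
  { rewrite (RInt_eval (fun x => f t m * x + f1 t m * (x - m)^2/2 + B * (x - m)^3/6) P).
    unfold m. field. lra.
    intros x _. unfold P. auto_derive. auto. field.
    intros x _. apply (ex_derive_continuous P x). unfold P. auto_derive. auto. }
  assert (Hle : RInt P k (k+1) <= RInt (f t) k (k+1)).
  { apply RInt_le. lra.
    apply (ex_RInt_continuous (V:=R_CompleteNormedModule)). intros z _. apply (ex_derive_continuous P z). unfold P. auto_derive. auto.
    apply ex_RInt_f; auto; lra.
    intros x Hx.
    assert (Hr : P x - f t x <= 0).
    { apply (tangent_le (fun y => P y - f t y) (fun y => (f1 t m + B * (y - m)) - f1 t y)
        (fun y => B - f2 t y) k (k+1) m x); try (unfold m; lra).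
      - intros y Hy. apply is_derive_Rminus. 
        unfold P. auto_derive. auto. field. apply d_f. apply (D_mono t k); auto; lra.
      - intros y Hy. apply is_derive_Rminus. auto_derive. auto. field.
        apply d_f1. apply (D_mono t k); auto; lra.
      - intros y Hy. unfold B. pose proof (f2_decr t y (k+1) ltac:(apply (D_mono t k); auto; lra) ltac:(lra)). lra.
      - unfold P. field.
      }
    lra. }
  unfold E. fold m. lra.
Qed.

Lemma hermite t k : D t (k - / 2) -> f2 t k <= f1 t (k + / 2) - f1 t (k - / 2).
Proof.
  intros Hk. set (Q := fun y => f2 t k + f3 t k * (y - k)).
  assert (Dy : forall y, k - /2 <= y <= k + /2 -> D t y).
  { intros y Hy. apply (D_mono t (k - /2)); auto; lra. }
  assert (HQ : @eq R (RInt Q (k - /2) (k + /2)) (f2 t k)).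
  { rewrite (RInt_eval (fun y => f2 t k * y + f3 t k * (y - k)^2/2) Q).
    field. lra.
    intros x _. unfold Q. auto_derive. auto. field.
    intros x _. apply (ex_derive_continuous Q x). unfold Q. auto_derive. auto. }
  assert (H2 : @eq R (RInt (f2 t) (k - /2) (k + /2)) (f1 t (k + /2) - f1 t (k - /2))).
  { apply RInt_eval. lra. intros x Hx. apply d_f1, Dy; auto. intros x Hx. apply cont_f2, Dy; auto. }
  assert (Hle : RInt Q (k - /2) (k + /2) <= RInt (f2 t) (k - /2) (k + /2)).
  { apply RInt_le. lra.
    apply (ex_RInt_continuous (V:=R_CompleteNormedModule)). intros z _. apply (ex_derive_continuous Q z). unfold Q. auto_derive. auto.
    apply ex_RInt_f2; auto; lra.
    intros x Hx.
    assert (Hr : Q x - f2 t x <= 0).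
    { apply (tangent_le (fun y => Q y - f2 t y) (fun y => f3 t k - f3 t y)
        (fun y => - f4 t y) (k - /2) (k + /2) k x); try lra.
      - intros y Hy. apply is_derive_Rminus.
        unfold Q. auto_derive. auto. field. apply d_f2. apply Dy; auto.
      - intros y Hy. replace (- f4 t y) with (0 - f4 t y) by ring. apply is_derive_Rminus.
        exact (is_derive_const (f3 t k) y). apply d_f3, Dy; auto.
      - intros y Hy. pose proof (f4_pos t y (Dy y Hy)). lra.
      - unfold Q. ring. }
    lra. }
  lra.
Qed.

Lemma tele_lower t a : D t a -> f1 t (a + 1) - f1 t a <= f2 t a.
Proof.
  intros Ha. destruct (MVT_gen (f1 t) a (a + 1) (f2 t)) as [c [Hc Ec]].
  - intros x Hx. apply d_f1. apply (D_mono t a); auto. rewrite Rmin_left in Hx; lra.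
  - intros x Hx. apply (cont_of_derive _ _ (f2 t x)). apply d_f1. apply (D_mono t a); auto. rewrite Rmin_left in Hx; lra.
  - rewrite Rmin_left in Hc by lra. rewrite Ec. replace (a + 1 - a) with 1 by ring.
    rewrite Rmult_1_r. apply f2_decr; auto; lra.
Qed.

Lemma Rint_RInt g a b : ex_RInt g a b -> Rint g a b = RInt g a b.
Proof.
  intros H. unfold Rint. pose proof (ex_RInt_Reals_0 g a b H) as pr.
  destruct (epsilon_spec (inhabits 0) (fun I => exists pr : Riemann_integrable g a b, RiemannInt pr = I))
    as [pr' Hpr'].
  { exists (RiemannInt pr). exists pr. reflexivity. }
  rewrite <- Hpr'. symmetry. apply RInt_Reals.
Qed.

Lemma ssum_lt g N n : (n < N)%nat -> ssum g N n = 0.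
Proof.
  induction n; intros H; simpl.
  - destruct N. lia. reflexivity.
  - rewrite IHn by lia. destruct (Nat.leb N (S n)) eqn:E.
    apply Nat.leb_le in E. lia. ring.
Qed.

Lemma ssum_S g N n : (N <= S n)%nat -> ssum g N (S n) = ssum g N n + g (S n).
Proof. intros H. simpl. apply Nat.leb_le in H. rewrite H. reflexivity. Qed.

Lemma ssum_N g N : (1 <= N)%nat -> ssum g N N = g N.
Proof. intros H. destruct N. lia. rewrite ssum_S by lia. rewrite ssum_lt by lia. ring. Qed.

Lemma ssum_minus g h N n : ssum (fun k => g k - h k) N n = ssum g N n - ssum h N n.
Proof. induction n; simpl. destruct (Nat.leb N 0); ring.
  rewrite IHn. destruct (Nat.leb N (S n)); ring. Qed.

Lemma ssum_split g N p n : (1 <= N)%nat -> (N <= p)%nat -> (p <= S n)%nat ->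
  ssum g N n = ssum g N (p - 1) + ssum g p n.
Proof.
  intros H1 H2. induction n; intros H3.
  - assert (p = 1%nat) as -> by lia. replace N with 1%nat by lia. simpl. ring.
  - destruct (Nat.eq_dec p (S (S n))) as [-> | Hne].
    + replace (S (S n) - 1)%nat with (S n) by lia. rewrite (ssum_lt g (S (S n)) (S n)) by lia. ring.
    + rewrite !ssum_S by lia. rewrite IHn by lia. ring.
Qed.

Definition Ek (t : R) (k : nat) := E t (INR k).

Lemma RInt_sum t N n : (1 <= N)%nat -> D t (INR N) -> (N <= S n)%nat ->
  RInt (f t) (INR N) (INR n + 1) = ssum (fun k => RInt (f t) (INR k) (INR k + 1)) N n.
Proof.
  intros H1 HD. induction n; intros H2.
  - replace N with 1%nat by lia. rewrite ssum_lt by lia. simpl. rewrite Rplus_0_l. apply (RInt_point (V:=R_CompleteNormedModule)).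
  - destruct (Nat.eq_dec N (S (S n))) as [-> | Hne].
    + rewrite ssum_lt by lia. rewrite <- S_INR. apply (RInt_point (V:=R_CompleteNormedModule)).
    + rewrite ssum_S by lia. rewrite <- IHn by lia. rewrite S_INR.
      assert (HN : INR N <= INR n + 1) by (rewrite <- S_INR; apply le_INR; lia).
      symmetry. apply (RInt_Chasles (V:=R_CompleteNormedModule) (f t)).
      apply ex_RInt_f; auto. apply ex_RInt_f. apply (D_mono t (INR N)); auto. lra.
Qed.

Lemma delta_n_sum t N n : (1 <= N)%nat -> D t (INR N) -> (N <= S n)%nat ->
  delta_n t N n = ssum (Ek t) N n.
Proof.
  intros H1 HD H2. unfold delta_n.
  assert (HN : INR N <= INR n + 1) by (rewrite <- S_INR; apply le_INR; lia).
  rewrite Rint_RInt. 2: { apply (ex_RInt_f t); auto. }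
  change (fun x => / (t + ln x)) with (f t).
  rewrite RInt_sum by auto. unfold Ek, E. rewrite ssum_minus. reflexivity.
Qed.

Lemma Dk t n k : D t (INR n) -> (n <= k)%nat -> D t (INR k).
Proof. intros H Hk. apply (D_mono t (INR n)); auto. apply le_INR; auto. Qed.

Lemma Ek_pos t k : D t (INR k) -> 0 < Ek t k.
Proof. intros H. unfold Ek. pose proof (E_lower t (INR k) H).
  pose proof (f2_pos t (INR k + 1) ltac:(apply (D_mono t (INR k)); auto; lra)). lra. Qed.

Lemma INR_nSm n m : INR (n + S m) = INR (n + m) + 1.
Proof. rewrite <- plus_n_Sm, S_INR. reflexivity. Qed.

Lemma tail_upper t n m : (1 <= n)%nat -> D t (INR n) ->
  ssum (Ek t) n (n + m) <= f2 t (INR n) / 24 + (f1 t (INR (n + m) + / 2) - f1 t (INR n + / 2)) / 24.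
Proof.
  intros H1 HD. induction m.
  - rewrite Nat.add_0_r, ssum_N by auto. unfold Ek. pose proof (E_upper t (INR n) HD). lra.
  - rewrite <- plus_n_Sm at 1. rewrite ssum_S by lia. rewrite plus_n_Sm.
    assert (HDk : D t (INR (n + S m) - / 2)).
    { apply (D_mono t (INR n)); auto. rewrite INR_nSm. assert (INR n <= INR (n+m)) by (apply le_INR; lia). lra. }
    pose proof (hermite t (INR (n + S m)) HDk) as Hh.
    pose proof (E_upper t (INR (n + S m)) (Dk t n (n + S m) HD ltac:(lia))) as Hu.
    unfold Ek at 2. replace (INR (n + S m) - / 2) with (INR (n + m) + / 2) in Hh by (rewrite INR_nSm; field).
    lra.
Qed.

Lemma tail_lower t n m : (1 <= n)%nat -> D t (INR n) ->
  (f1 t (INR (n + m) + 2) - f1 t (INR n + 1)) / 24 <= ssum (Ek t) n (n + m).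
Proof.
  intros H1 HD. induction m.
  - rewrite Nat.add_0_r, ssum_N by auto. unfold Ek. pose proof (E_lower t (INR n) HD).
    pose proof (tele_lower t (INR n + 1) ltac:(apply (D_mono t (INR n)); auto; lra)).
    replace (INR n + 1 + 1) with (INR n + 2) in H0 by ring. lra.
  - rewrite <- plus_n_Sm. rewrite ssum_S by lia.
    pose proof (E_lower t (INR (S (n + m))) (Dk t n (S (n + m)) HD ltac:(lia))) as Hl.
    pose proof (tele_lower t (INR (S (n + m)) + 1) ltac:(apply (D_mono t (INR (S (n + m)))); [apply (Dk t n); auto; lia | lra])) as Ht.
    unfold Ek at 2. rewrite S_INR in *.
    replace (INR (n + m) + 1 + 1 + 1) with (INR (n + m) + 1 + 2) in Ht by ring.
    replace (INR (n + m) + 1 + 1) with (INR (n + m) + 2) in Ht, Hl by ring.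
    lra.
Qed.

Lemma Un_cv_ext (u v : nat -> R) l : (forall m, u m = v m) -> Un_cv u l -> Un_cv v l.
Proof. intros H Hu e He. destruct (Hu e He) as [M HM]. exists M. intros m Hm. rewrite <- H. auto. Qed.

Lemma f1_lim t n : D t (INR n) -> Un_cv (fun m => f1 t (INR (n + m) + 2)) 0.
Proof.
  intros [Hn Hc] e He. set (c := t + ln (INR n)).
  assert (Hc2 : 0 < c ^ 2) by (unfold c; pos).
  destruct (INR_archimed (c^2) (/ e) Hc2) as [M HM]. exists M. intros m Hm.
  unfold R_dist. rewrite Rminus_0_r. set (x := INR (n + m) + 2).
  assert (HxM : INR M <= x).
  { unfold x. assert (INR M <= INR (n + m)) by (apply le_INR; lia). lra. }
  assert (Hx : 0 < x) by (unfold x; pose proof (pos_INR (n+m)); lra).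
  assert (HL : c <= t + ln x) by (apply L_le; unfold x; auto; assert (INR n <= INR (n+m)) by (apply le_INR; lia); lra).
  assert (HP : INR M * c ^ 2 <= x * (t + ln x) ^ 2).
  { destruct (Rle_lt_dec (INR M) 0).
    - assert (0 <= x * (t + ln x)^2) by (apply Rmult_le_pos; [lra | apply pow2_ge_0]). nra.
    - apply prod_le; auto. apply pow_le_mono; auto. }
  assert (0 < t + ln x) by (unfold c in *; lra). unfold f1. rewrite Rabs_Ropp. rewrite Rabs_pos_eq by (apply Rlt_le; pos).
  rewrite <- (Rinv_inv e). apply Rinv_lt_contravar.
  - apply Rmult_lt_0_compat. apply Rinv_0_lt_compat; lra. pos.
  - lra.
Qed.

Lemma Un_cv_const a : Un_cv (fun _ => a) a.
Proof. intros e He. exists 0%nat. intros. unfold R_dist. rewrite Rminus_diag, Rabs_R0. lra. Qed.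

Lemma Un_cv_aff (u : nat -> R) l a : Un_cv u l -> Un_cv (fun m => (u m - a) / 24) ((l - a) / 24).
Proof. intros H e He. destruct (H e He) as [M HM]. exists M. intros m Hm.
  specialize (HM m Hm). unfold R_dist in *.
  replace ((u m - a) / 24 - (l - a) / 24) with ((u m - l) / 24) by field.
  unfold Rdiv. rewrite Rabs_mult, (Rabs_pos_eq (/24)) by lra. lra. Qed.

Lemma delta_cv t n : (1 <= n)%nat -> D t (INR n) ->
  Un_cv (fun m => ssum (Ek t) n (n + m)) (delta t n).
Proof.
  intros H1 HD. set (Sq := fun m => ssum (Ek t) n (n + m)).
  assert (Hg : Un_growing Sq).
  { intros m. unfold Sq. rewrite <- plus_n_Sm. rewrite ssum_S by lia.
    pose proof (Ek_pos t (S (n + m)) (Dk t n (S (n + m)) HD ltac:(lia))). lra. }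
  assert (Hub : has_ub Sq).
  { exists (f2 t (INR n) / 24 - f1 t (INR n + / 2) / 24). intros x [m ->].
    pose proof (tail_upper t n m H1 HD).
    pose proof (f1_neg t (INR (n + m) + / 2) ltac:(apply (D_mono t (INR n)); auto; assert (INR n <= INR (n+m)) by (apply le_INR; lia); lra)).
    unfold Sq. lra. }
  destruct (growing_cv Sq Hg Hub) as [l Hl].
  assert (Hd : forall m, delta_n t n (n + m) = Sq m) by (intro m; apply delta_n_sum; auto; lia).
  unfold delta.
  pose proof (epsilon_spec (inhabits 0) (fun l => Un_cv (fun m => delta_n t n (n + m)) l)
    (ex_intro _ l (Un_cv_ext _ _ _ (fun m => eq_sym (Hd m)) Hl))) as He.
  apply (Un_cv_ext _ _ _ Hd He).
Qed.

Lemma delta_upper t n : (1 <= n)%nat -> D t (INR n) ->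
  delta t n <= f2 t (INR n) / 24 - f1 t (INR n + / 2) / 24.
Proof.
  intros H1 HD. eapply Rle_cv_lim; [ | apply (delta_cv t n H1 HD) | apply Un_cv_const ].
  intros m. simpl.
  pose proof (tail_upper t n m H1 HD).
  pose proof (f1_neg t (INR (n + m) + / 2) ltac:(apply (D_mono t (INR n)); auto; assert (INR n <= INR (n+m)) by (apply le_INR; lia); lra)).
  lra.
Qed.

Lemma delta_lower t n : (1 <= n)%nat -> D t (INR n) ->
  - f1 t (INR n + 1) / 24 <= delta t n.
Proof.
  intros H1 HD.
  replace (- f1 t (INR n + 1) / 24) with ((0 - f1 t (INR n + 1)) / 24) by field.
  eapply Rle_cv_lim; [ | apply (Un_cv_aff _ _ _ (f1_lim t n HD)) | apply (delta_cv t n H1 HD) ].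
  intros m. apply tail_lower; auto.
Qed.

Lemma Un_cv_shift (u : nat -> R) l p : Un_cv u l -> Un_cv (fun m => u (p + m)%nat) l.
Proof. intros H e He. destruct (H e He) as [M HM]. exists M. intros m Hm. apply HM. lia. Qed.

Lemma Un_cv_subc (u : nat -> R) l c : Un_cv u l -> Un_cv (fun m => u m - c) (l - c).
Proof. intros H e He. destruct (H e He) as [M HM]. exists M. intros m Hm.
  specialize (HM m Hm). unfold R_dist in *. replace (u m - c - (l - c)) with (u m - l) by ring. auto. Qed.

Lemma delta_shift t N n : (1 <= N)%nat -> D t (INR N) -> (N <= n)%nat ->
  delta t N - delta_n t N (n - 1) = delta t n.
Proof.
  intros H1 HD Hn. assert (HDn : D t (INR n)) by (apply (Dk t N); auto).
  rewrite (delta_n_sum t N (n - 1)) by (auto; lia).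
  apply (UL_sequence (fun m => ssum (Ek t) n (n + m))); [ | apply delta_cv; auto; lia].
  pose proof (Un_cv_subc _ _ (ssum (Ek t) N (n - 1)) (Un_cv_shift _ _ (n - N) (delta_cv t N H1 HD))) as H.
  refine (Un_cv_ext _ _ _ _ H). intros m. simpl.
  replace (N + (n - N + m))%nat with (n + m)%nat by lia.
  rewrite (ssum_split (Ek t) N n (n + m)) by lia. ring.
Qed.

Lemma lim_INRc c : is_lim_seq (fun n => INR n + c) p_infty.
Proof. apply (is_lim_seq_plus _ _ p_infty c). apply is_lim_seq_INR. apply is_lim_seq_const. reflexivity. Qed.

Lemma lim_L t c : is_lim_seq (fun n => t + ln (INR n + c)) p_infty.
Proof.
  apply (is_lim_seq_plus _ _ t p_infty). apply is_lim_seq_const.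
  apply (is_lim_comp_seq ln (fun n => INR n + c) p_infty p_infty). apply is_lim_ln_p.
  exists 0%nat. intros. discriminate. apply lim_INRc. reflexivity.
Qed.

Lemma lim_inv_p (u : nat -> R) : is_lim_seq u p_infty -> is_lim_seq (fun n => / u n) 0.
Proof. intros H. apply (is_lim_seq_inv _ p_infty H). discriminate. Qed.

Lemma ev_pos (u : nat -> R) : is_lim_seq u p_infty -> eventually (fun n => 0 < u n).
Proof. intros H. apply is_lim_seq_spec in H. apply (H 0). Qed.

Lemma lim_frac c : 0 < c -> is_lim_seq (fun n => INR n / (INR n + c)) 1.
Proof.
  intros Hc. apply (is_lim_seq_ext (fun n => 1 - c * / (INR n + c))).
  { intros n. pose proof (pos_INR n). field. lra. }
  replace (Finite 1) with (Finite (1 - c * 0)) by (f_equal; ring).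
  apply is_lim_seq_minus'. apply is_lim_seq_const.
  apply is_lim_seq_mult'. apply is_lim_seq_const. apply lim_inv_p, lim_INRc.
Qed.

Lemma lim_ratio t c : 0 <= c <= 1 ->
  is_lim_seq (fun n => ln (INR n) / (t + ln (INR n + c))) 1.
Proof.
  intros Hc. set (K := Rabs t + ln 2).
  assert (Hw : forall n, (1 <= n)%nat -> Rabs (t + ln (INR n + c) - ln (INR n)) <= K).
  { intros n Hn. assert (H1 : 1 <= INR n) by (apply (le_INR 1); auto).
    assert (ln (INR n) <= ln (INR n + c)) by (apply ln_le; lra).
    assert (ln (INR n + c) <= ln 2 + ln (INR n)).
    { rewrite <- ln_mult by lra. apply ln_le; lra. }
    unfold K. pose proof (Rabs_triang t (ln (INR n + c) - ln (INR n))).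
    rewrite (Rabs_pos_eq (ln (INR n + c) - ln (INR n))) in H2 by lra.
    replace (t + ln (INR n + c) - ln (INR n)) with (t + (ln (INR n + c) - ln (INR n))) by ring. lra. }
  pose proof (lim_inv_p _ (lim_L t c)) as HI.
  assert (HwL : is_lim_seq (fun n => (t + ln (INR n + c) - ln (INR n)) / (t + ln (INR n + c))) 0).
  { apply (is_lim_seq_le_le_loc (fun n => - K * / (t + ln (INR n + c))) _ (fun n => K * / (t + ln (INR n + c)))).
    - destruct (ev_pos _ (lim_L t c)) as [M HM]. exists (S M). intros n Hn.
      specialize (HM n ltac:(lia)). specialize (Hw n ltac:(lia)).
      apply Rabs_le_between in Hw. unfold Rdiv.
      assert (0 < / (t + ln (INR n + c))) by (apply Rinv_0_lt_compat; auto).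
      split; apply Rmult_le_compat_r; lra.
    - replace (Finite 0) with (Finite (- K * 0)) by (f_equal; ring). apply is_lim_seq_mult'. apply is_lim_seq_const. auto.
    - replace (Finite 0) with (Finite (K * 0)) by (f_equal; ring). apply is_lim_seq_mult'. apply is_lim_seq_const. auto. }
  apply (is_lim_seq_ext_loc (fun n => 1 - (t + ln (INR n + c) - ln (INR n)) / (t + ln (INR n + c)))).
  { destruct (ev_pos _ (lim_L t c)) as [M HM]. exists M. intros n Hn. specialize (HM n Hn). field. lra. }
  replace (Finite 1) with (Finite (1 - 0)) by (f_equal; ring).
  apply is_lim_seq_minus'. apply is_lim_seq_const. auto.
Qed.

Lemma lim3a t N : (1 <= N)%nat -> D t (INR N) ->
  Un_cv (fun n => (delta t N - delta_n t N (n - 1)) * (24 * INR n * ln (INR n) ^ 2)) 1.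
Proof.
  intros H1 HD. apply is_lim_seq_Reals.
  set (lo := fun n => INR n / (INR n + 1) * (ln (INR n) / (t + ln (INR n + 1))) ^ 2).
  set (hi := fun n => INR n / (INR n + / 2) * (ln (INR n) / (t + ln (INR n + / 2))) ^ 2
     + / INR n * (ln (INR n) / (t + ln (INR n + 0))) ^ 2
     + 2 * / INR n * (ln (INR n) / (t + ln (INR n + 0))) ^ 2 * / (t + ln (INR n + 0))).
  apply (is_lim_seq_le_le_loc lo _ hi).
  - exists N. intros n Hn.
    assert (HDn : D t (INR n)) by (apply (Dk t N); auto).
    rewrite delta_shift by auto.
    pose proof (delta_lower t n ltac:(lia) HDn) as Hl.
    pose proof (delta_upper t n ltac:(lia) HDn) as Hu.
    assert (Hp : 0 <= 24 * INR n * ln (INR n) ^ 2).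
    { apply Rmult_le_pos. pose proof (pos_INR n). lra. apply pow2_ge_0. }
    destruct HDn as [Hx HL].
    assert (HL1 : 0 < t + ln (INR n + 1)) by (pose proof (L_le t (INR n) (INR n + 1) Hx ltac:(lra)); lra).
    assert (HL2 : 0 < t + ln (INR n + / 2)) by (pose proof (L_le t (INR n) (INR n + / 2) Hx ltac:(lra)); lra).
    split.
    + replace (lo n) with ((- f1 t (INR n + 1) / 24) * (24 * INR n * ln (INR n) ^ 2)).
      apply Rmult_le_compat_r; auto.
      unfold lo, f1. field. split; lra.
    + replace (hi n) with ((f2 t (INR n) / 24 - f1 t (INR n + / 2) / 24) * (24 * INR n * ln (INR n) ^ 2)).
      apply Rmult_le_compat_r; auto.
      unfold hi, f1, f2. rewrite Rplus_0_r. field. repeat split; lra.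
  - unfold lo. replace (Finite 1) with (Finite (1 * 1 ^ 2)) by (f_equal; ring).
    apply is_lim_seq_mult'. apply lim_frac; lra.
    apply (is_lim_seq_ext (fun n => (ln (INR n) / (t + ln (INR n + 1))) * ((ln (INR n) / (t + ln (INR n + 1))) * 1))).
    intros; ring.
    apply is_lim_seq_mult'. apply lim_ratio; lra. apply is_lim_seq_mult'. apply lim_ratio; lra. apply is_lim_seq_const.
  - unfold hi. replace (Finite 1) with (Finite (1 * 1 ^ 2 + 0 * 1 ^ 2 + 2 * 0 * 1 ^ 2 * 0)) by (f_equal; ring).
    assert (Hr : forall c, 0 <= c <= 1 -> is_lim_seq (fun n => (ln (INR n) / (t + ln (INR n + c))) ^ 2) (1 ^ 2)).
    { intros c Hc. apply (is_lim_seq_ext (fun n => (ln (INR n) / (t + ln (INR n + c))) * ((ln (INR n) / (t + ln (INR n + c))) * 1))).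
      intros; ring.
      replace (1 ^ 2) with (1 * (1 * 1)) by ring.
      apply is_lim_seq_mult'. apply lim_ratio; lra. apply is_lim_seq_mult'. apply lim_ratio; lra. apply is_lim_seq_const. }
    assert (Hn : is_lim_seq (fun n => / INR n) 0).
    { apply lim_inv_p. apply is_lim_seq_INR. }
    assert (HL0 : is_lim_seq (fun n => / (t + ln (INR n + 0))) 0) by apply lim_inv_p, lim_L.
    apply is_lim_seq_plus'. apply is_lim_seq_plus'.
    + apply is_lim_seq_mult'. apply lim_frac; lra. apply Hr; lra.
    + apply is_lim_seq_mult'. auto. apply Hr; lra.
    + apply is_lim_seq_mult'. apply is_lim_seq_mult'. apply is_lim_seq_mult'. apply is_lim_seq_const. auto. apply Hr; lra. auto.
Qed.

Lemma ssum_pos t N m : (1 <= N)%nat -> D t (INR N) -> 0 < ssum (Ek t) N (N + m).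
Proof.
  intros H1 HD. induction m.
  - rewrite Nat.add_0_r, ssum_N by auto. apply Ek_pos; auto.
  - rewrite <- plus_n_Sm, ssum_S by lia. pose proof (Ek_pos t (S (N + m)) (Dk t N (S (N + m)) HD ltac:(lia))). lra.
Qed.

Lemma bound3b t N : (1 <= N)%nat -> 1 <= t -> delta t N <= 1 / (INR N * t ^ 2).
Proof.
  intros H1 Ht. set (x := INR N).
  assert (Hx : 1 <= x) by (apply (le_INR 1); auto).
  assert (Hl : 0 <= ln x) by (rewrite <- ln_1; apply ln_le; lra).
  assert (Hlh : 0 <= ln (x + / 2)) by (rewrite <- ln_1; apply ln_le; lra).
  assert (HD : D t x) by (split; lra).
  pose proof (delta_upper t N H1 HD) as Hu. fold x in Hu.
  set (L := t + ln x) in *. set (Lh := t + ln (x + / 2)) in *.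
  assert (HL : t <= L) by (unfold L; lra). assert (HLh : t <= Lh) by (unfold Lh; lra).
  assert (Hxt : 0 < x * t ^ 2) by pos.
  assert (A1 : / ((x + / 2) * Lh ^ 2) <= / (x * t ^ 2)).
  { apply Rinv_le_contravar; auto. apply prod_le; try lra; try pos. apply pow_le_mono; lra. }
  assert (A2 : / (x ^ 2 * L ^ 2) <= / (x * t ^ 2)).
  { apply Rinv_le_contravar; auto. apply prod_le; try pos. simpl; nra. apply pow_le_mono; lra. }
  assert (A3 : / (x ^ 2 * L ^ 3) <= / (x * t ^ 2)).
  { apply Rinv_le_contravar; auto. apply prod_le; try pos. simpl; nra.
    assert (t ^ 2 <= L ^ 2) by (apply pow_le_mono; lra). simpl in *. nra. }
  unfold f2, f1 in Hu. fold L Lh in Hu. unfold Rdiv in *.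
  set (a := / (x ^ 2 * L ^ 2)) in *. set (b := / (x ^ 2 * L ^ 3)) in *.
  set (c := / ((x + / 2) * Lh ^ 2)) in *. set (y := / (x * t ^ 2)) in *.
  replace ((a + 2 * b) * / 24 - - c * / 24) with ((a + 2 * b + c) / 24) in Hu by field.
  assert (0 < y) by (apply Rinv_0_lt_compat; exact Hxt).
  lra.
Qed.

Theorem proposition3p6 :
  (forall (N : nat) (t : R), (1 <= N)%nat -> - ln (INR N) < t ->
     (* (1) *)
     (forall n, (N <= n)%nat -> 0 < delta_n t N n) /\
     (forall n, (N <= n)%nat -> delta_n t N n < delta_n t N (S n)) /\
     (exists M, forall n, (N <= n)%nat -> delta_n t N n <= M) /\
     Un_cv (fun m => delta_n t N (N + m)) (delta t N) /\
     0 < delta t N /\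
     (* (2) *)
     (forall n, (N <= n)%nat ->
        delta t N - delta_n t N (n - 1) = delta t n /\
        / (24 * (INR n + 1) * (t + ln (INR n + 1)) ^ 2) <= delta t n /\
        delta t n <=
          / (24 * (INR n + / 2) * (t + ln (INR n + / 2)) ^ 2)
          + / (24 * INR n ^ 2 * (t + ln (INR n)) ^ 2)
          + / (12 * INR n ^ 2 * (t + ln (INR n)) ^ 3)) /\
     (* (3a): delta(t,N) - delta_{n-1}(t,N) = (1+o(1)) / (24 n (log n)^2) *)
     Un_cv (fun n => (delta t N - delta_n t N (n - 1))
                     * (24 * INR n * (ln (INR n)) ^ 2)) 1)
  /\
  (* (3b): delta(t,N) = O(1/(N t^2)) as t -> oo, uniformly in N *)
  (exists C T : R, forall (N : nat) (t : R), (1 <= N)%nat -> T <= t ->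
     - ln (INR N) < t -> Rabs (delta t N) <= C / (INR N * t ^ 2)).
Proof.
  split.
  - intros N t H1 Ht.
    assert (HD : D t (INR N)) by (split; [apply lt_0_INR; lia | lra]).
    assert (Hdpos : 0 < delta t N).
    { pose proof (delta_lower t N H1 HD). pose proof (f1_neg t (INR N + 1) ltac:(apply (D_mono t (INR N)); auto; lra)). lra. }
    split; [| split; [| split; [| split; [| split; [| split]]]]].
    + intros n Hn. rewrite delta_n_sum by (auto; lia). replace n with (N + (n - N))%nat by lia. apply ssum_pos; auto.
    + intros n Hn. rewrite !delta_n_sum by (auto; lia). rewrite ssum_S by lia.
      pose proof (Ek_pos t (S n) (Dk t N (S n) HD ltac:(lia))). lra.
    + exists (f2 t (INR N) / 24 - f1 t (INR N + / 2) / 24). intros n Hn.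
      rewrite delta_n_sum by (auto; lia). replace n with (N + (n - N))%nat by lia.
      pose proof (tail_upper t N (n - N) H1 HD).
      pose proof (f1_neg t (INR (N + (n - N)) + / 2) ltac:(apply (D_mono t (INR N)); auto; assert (INR N <= INR (N + (n - N))) by (apply le_INR; lia); lra)).
      lra.
    + apply (Un_cv_ext (fun m => ssum (Ek t) N (N + m))). intros m. symmetry. apply delta_n_sum; auto; lia.
      apply delta_cv; auto.
    + exact Hdpos.
    + intros n Hn. assert (HDn : D t (INR n)) by (apply (Dk t N); auto).
      split; [apply delta_shift; auto |].
      pose proof (delta_lower t n ltac:(lia) HDn) as Hl.
      pose proof (delta_upper t n ltac:(lia) HDn) as Hu.
      destruct HDn as [Hx HL].
      assert (HL1 : 0 < t + ln (INR n + 1)) by (pose proof (L_le t (INR n) (INR n + 1) Hx ltac:(lra)); lra).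
      assert (HL2 : 0 < t + ln (INR n + / 2)) by (pose proof (L_le t (INR n) (INR n + / 2) Hx ltac:(lra)); lra).
      split.
      * replace (/ (24 * (INR n + 1) * (t + ln (INR n + 1)) ^ 2)) with (- f1 t (INR n + 1) / 24); auto.
        unfold f1. field. split; lra.
      * replace (/ (24 * (INR n + / 2) * (t + ln (INR n + / 2)) ^ 2) + / (24 * INR n ^ 2 * (t + ln (INR n)) ^ 2)
          + / (12 * INR n ^ 2 * (t + ln (INR n)) ^ 3)) with (f2 t (INR n) / 24 - f1 t (INR n + / 2) / 24); auto.
        unfold f1, f2. field. repeat split; lra.
    + apply lim3a; auto.
  - exists 1, 1. intros N t H1 Ht _.
    assert (HD : D t (INR N)).
    { split. apply lt_0_INR; lia. assert (0 <= ln (INR N)) by (rewrite <- ln_1; apply ln_le; [lra | apply (le_INR 1); auto]). lra. }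
    pose proof (delta_lower t N H1 HD). pose proof (f1_neg t (INR N + 1) ltac:(apply (D_mono t (INR N)); auto; lra)).
    rewrite Rabs_pos_eq by lra. apply bound3b; auto.
Qed.
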